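(* Let $(a,b,c,d)\in\mathbb{C}^4\setminus\{0\}$ and $f=G_{a,b,c,d}$. Then the following are equivalent: (i) $f$ is reducible; (ii) either $a^2=b^2=c^2=d^2$, or at least three of $a,b,c,d$ are zero; (iii) the point $[f]\in\mathbb{P}(V)$ lies in the $\Gamma$-orbit of $[(x_1x_2-y_1y_2)(x_3x_4-y_3y_4)]$ (note that $G_{0,0,0,1}=\frac12(x_1x_2-y_1y_2)(x_3x_4-y_3y_4)$).
   Context: Let $(\mathbb{P}^1)^4$ have bihomogeneous coordinates $((x_1:y_1),(x_2:y_2),(x_3:y_3),(x_4:y_4))$, and $V=H^0((\mathbb{P}^1)^4,\mathcal{O}(1,1,1,1))$. For $(a,b,c,d)\in\mathbb{C}^4$ put $$G_{a,b,c,d}=\tfrac{a+d}{2}(x_1x_2x_3x_4+y_1y_2y_3y_4)+\tfrac{a-d}{2}(x_1x_2y_3y_4+y_1y_2x_3x_4)+\tfrac{b+c}{2}(x_1y_2x_3y_4+y_1x_2y_3x_4)+\tfrac{b-c}{2}(x_1y_2y_3x_4+y_1x_2x_3y_4).$$ $\Gamma=\mathrm{SL}_2(\mathbb{C})^4\rtimes\mathfrak{S}_4$ acts on $V$ and $\mathbb{P}(V)$, the $i$-th factor $\mathrm{SL}_2(\mathbb{C})$ acting linearly on $(x_i,y_i)$ and $\mathfrak{S}_4$ permuting the four factors of $(\mathbb{P}^1)^4$. *)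

(* Defs.v *)
From HB Require Import structures.
From mathcomp Require Import all_boot all_algebra all_fingroup.
From mathcomp Require Import complex.
From mathcomp Require Import Rstruct.
From mathcomp Require Import mpoly.
Set Implicit Arguments. Unset Strict Implicit. Unset Printing Implicit Defensive.
Import GRing.Theory.
Local Open Scope ring_scope.

Definition C : closedFieldType := complex Rdefinitions.R.

(* Polynomial ring C[x1,y1,x2,y2,x3,y3,x4,y4]; variable 2i is x_{i+1},
   variable 2i+1 is y_{i+1} (i : 'I_4, so factors are numbered 0..3). *)
Definition Pol := {mpoly C[8]}.

Definition xi (i : 'I_4) : 'I_8 := inord (2 * i).
Definition yi (i : 'I_4) : 'I_8 := inord (2 * i).+1.

Definition X (i : 'I_4) : Pol := 'X_(xi i).
Definition Y (i : 'I_4) : Pol := 'X_(yi i).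

Definition i0 : 'I_4 := inord 0.
Definition i1 : 'I_4 := inord 1.
Definition i2 : 'I_4 := inord 2.
Definition i3 : 'I_4 := inord 3.

Definition G (a b c d : C) : Pol :=
    ((a + d) / 2) *: (X i0 * X i1 * X i2 * X i3 + Y i0 * Y i1 * Y i2 * Y i3)
  + ((a - d) / 2) *: (X i0 * X i1 * Y i2 * Y i3 + Y i0 * Y i1 * X i2 * X i3)
  + ((b + c) / 2) *: (X i0 * Y i1 * X i2 * Y i3 + Y i0 * X i1 * Y i2 * X i3)
  + ((b - c) / 2) *: (X i0 * Y i1 * Y i2 * X i3 + Y i0 * X i1 * X i2 * Y i3).

Definition q0 : Pol :=
  (X i0 * X i1 - Y i0 * Y i1) * (X i2 * X i3 - Y i2 * Y i3).

(* Reducibility in the polynomial ring (a UFD whose units are the nonzero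
   constants): a nonzero non-unit which is a product of two non-units. *)
Definition reducible (p : Pol) : Prop :=
  [/\ p != 0, p \isn't a GRing.unit &
      exists g h : Pol, [/\ p = g * h, g \isn't a GRing.unit & h \isn't a GRing.unit]].

(* Action of (M, s) in SL_2(C)^4 x| S_4 on polynomials, by linear substitution:
   x_i |-> M_i(0,0) x_{s i} + M_i(0,1) y_{s i},
   y_i |-> M_i(1,0) x_{s i} + M_i(1,1) y_{s i}.
   Every element of Gamma acts by such a substitution and every such
   substitution (with det M_i = 1) comes from an element of Gamma. *)
Definition subst_var (M : 'I_4 -> 'M[C]_2) (s : {perm 'I_4}) (k : 'I_8) : Pol :=
  let i : 'I_4 := inord (k./2) in
  let r : 'I_2 := inord (odd k) in
  (M i r (inord 0)) *: X (s i) + (M i r (inord 1)) *: Y (s i).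

Definition act (M : 'I_4 -> 'M[C]_2) (s : {perm 'I_4}) (p : Pol) : Pol :=
  p \mPo [tuple subst_var M s k | k < 8].

Definition in_proj_orbit (f g : Pol) : Prop :=
  exists (M : 'I_4 -> 'M[C]_2) (s : {perm 'I_4}) (lam : C),
    [/\ forall i, \det (M i) = 1, lam != 0 & f = lam *: act M s g].

(* Main.v *)
Require Import Defs.
From HB Require Import structures.
From mathcomp Require Import all_boot all_order all_algebra all_fingroup.
From mathcomp Require Import complex Rstruct mpoly.
From mathcomp Require Import ring zify.
Import Order.TTheory GRing.Theory Num.Theory.
Local Open Scope ring_scope.

Lemma val_xi (i : 'I_4) : (xi i : nat) = (2 * i)%N.
Proof. by rewrite /xi inordK //; have := ltn_ord i; lia. Qed.
Lemma val_yi (i : 'I_4) : (yi i : nat) = (2 * i).+1%N.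
Proof. by rewrite /yi inordK //; have := ltn_ord i; lia. Qed.

Lemma xx_eq i j : (xi i == xi j) = (i == j).
Proof. rewrite -val_eqE -[i == j]val_eqE /= !val_xi; apply/eqP/eqP; lia. Qed.
Lemma yy_eq i j : (yi i == yi j) = (i == j).
Proof. rewrite -val_eqE -[i == j]val_eqE /= !val_yi; apply/eqP/eqP; lia. Qed.
Lemma xy_eq i j : (xi i == yi j) = false.
Proof. rewrite -val_eqE /= val_xi val_yi; apply/negbTE/eqP; lia. Qed.
Lemma yx_eq i j : (yi i == xi j) = false.
Proof. rewrite -val_eqE /= val_xi val_yi; apply/negbTE/eqP; lia. Qed.

Lemma pair_of (k : 'I_8) : exists i : 'I_4, k = xi i \/ k = yi i.
Proof.
have hk := ltn_ord k.
have h2 : (k./2 < 4)%N by rewrite ltn_half_double.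
exists (inord k./2); have oh := odd_double_half k.
case: (boolP (odd k)) => ho; [right|left]; apply/val_inj.
  rewrite /= val_yi inordK //; move: oh; rewrite ho -mul2n; lia.
rewrite /= val_xi inordK //; move: oh; rewrite (negbTE ho) -mul2n; lia.
Qed.

Definition sel (i : 'I_4) (b : bool) : 'I_8 := if b then xi i else yi i.
Definition part (e c : 'I_4 -> bool) : 'X_{1..8} :=
  (\sum_(i < 4 | e i) U_(sel i (c i)))%MM.
Definition mon (c : 'I_4 -> bool) := part (fun _ => true) c.

Lemma sel_xi i b j : (sel i b == xi j) = (i == j) && b.
Proof. by case: b; rewrite /sel ?xx_eq ?yx_eq ?andbT ?andbF. Qed.
Lemma sel_yi i b j : (sel i b == yi j) = (i == j) && ~~ b.
Proof. by case: b; rewrite /sel ?yy_eq ?xy_eq ?andbT ?andbF. Qed.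

Lemma part_xi e c j : part e c (xi j) = (e j && c j) :> nat.
Proof.
rewrite /part mnm_sumE big_mkcond (bigD1 j) //= big1 ?addn0.
  by rewrite mnm1E sel_xi eqxx /=; case: (e j).
by move=> i /negbTE nij; rewrite mnm1E sel_xi nij; case: (e i).
Qed.
Lemma part_yi e c j : part e c (yi j) = (e j && ~~ c j) :> nat.
Proof.
rewrite /part mnm_sumE big_mkcond (bigD1 j) //= big1 ?addn0.
  by rewrite mnm1E sel_yi eqxx /=; case: (e j).
by move=> i /negbTE nij; rewrite mnm1E sel_yi nij; case: (e i).
Qed.

Lemma vi0 : (i0 : nat) = 0%N. Proof. by rewrite /i0 inordK. Qed.
Lemma vi1 : (i1 : nat) = 1%N. Proof. by rewrite /i1 inordK. Qed.
Lemma vi2 : (i2 : nat) = 2%N. Proof. by rewrite /i2 inordK. Qed.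
Lemma vi3 : (i3 : nat) = 3%N. Proof. by rewrite /i3 inordK. Qed.

Lemma ord4 (i : 'I_4) : [\/ i = i0, i = i1, i = i2 | i = i3].
Proof.
case: i => [[|[|[|[|k]]]] hi] //.
- by constructor 1; apply/val_inj; rewrite /= vi0.
- by constructor 2; apply/val_inj; rewrite /= vi1.
- by constructor 3; apply/val_inj; rewrite /= vi2.
- by constructor 4; apply/val_inj; rewrite /= vi3.
Qed.

Lemma big4 (R : Type) (idx : R) (op : Monoid.law idx) (F : 'I_4 -> R) :
  \big[op/idx]_(i < 4) F i = op (op (op (F i0) (F i1)) (F i2)) (F i3).
Proof.
rewrite !big_ord_recr big_ord0 Monoid.mul1m.
congr (op (op (op (F _) (F _)) (F _)) (F _)); apply/val_inj;
  by rewrite /= ?vi0 ?vi1 ?vi2 ?vi3.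
Qed.

Definition cf4 (b0 b1 b2 b3 : bool) : 'I_4 -> bool :=
  fun i => nth false [:: b0; b1; b2; b3] i.
Lemma cf4_0 b0 b1 b2 b3 : cf4 b0 b1 b2 b3 i0 = b0. Proof. by rewrite /cf4 vi0. Qed.
Lemma cf4_1 b0 b1 b2 b3 : cf4 b0 b1 b2 b3 i1 = b1. Proof. by rewrite /cf4 vi1. Qed.
Lemma cf4_2 b0 b1 b2 b3 : cf4 b0 b1 b2 b3 i2 = b2. Proof. by rewrite /cf4 vi2. Qed.
Lemma cf4_3 b0 b1 b2 b3 : cf4 b0 b1 b2 b3 i3 = b3. Proof. by rewrite /cf4 vi3. Qed.

Definition V (i : 'I_4) (b : bool) : Pol := if b then X i else Y i.

Definition M4 b0 b1 b2 b3 := mon (cf4 b0 b1 b2 b3).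

Lemma XM4 b0 b1 b2 b3 :
  'X_[M4 b0 b1 b2 b3] = V i0 b0 * V i1 b1 * V i2 b2 * V i3 b3.
Proof.
rewrite /M4 /mon /part -mprodXE big4 !cf4_0 !cf4_1 !cf4_2 !cf4_3.
by rewrite /V /sel /X /Y; case: b0; case: b1; case: b2; case: b3.
Qed.

Lemma mon_xi c j : mon c (xi j) = c j :> nat.
Proof. by rewrite part_xi. Qed.
Lemma mon_yi c j : mon c (yi j) = ~~ c j :> nat.
Proof. by rewrite part_yi. Qed.

Lemma nat_bool_inj (b c : bool) : (b : nat) = c -> b = c.
Proof. by case: b; case: c. Qed.

Lemma eqM4 b0 b1 b2 b3 c0 c1 c2 c3 :
  (M4 b0 b1 b2 b3 == M4 c0 c1 c2 c3) = [&& b0 == c0, b1 == c1, b2 == c2 & b3 == c3].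
Proof.
apply/eqP/idP; last by case/and4P => /eqP-> /eqP-> /eqP-> /eqP->.
move=> E; have h i : cf4 b0 b1 b2 b3 i = cf4 c0 c1 c2 c3 i.
  by apply: nat_bool_inj; rewrite -!mon_xi -/(M4 _ _ _ _) E.
move: (h i0) (h i1) (h i2) (h i3).
by rewrite !cf4_0 !cf4_1 !cf4_2 !cf4_3 => -> -> -> ->; rewrite !eqxx.
Qed.

Lemma Gnf a b c d : G a b c d =
    ((a + d) / 2) *: ('X_[M4 true true true true] + 'X_[M4 false false false false])
  + ((a - d) / 2) *: ('X_[M4 true true false false] + 'X_[M4 false false true true])
  + ((b + c) / 2) *: ('X_[M4 true false true false] + 'X_[M4 false true false true])
  + ((b - c) / 2) *: ('X_[M4 true false false true] + 'X_[M4 false true true false]).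
Proof. by rewrite !XM4 /V. Qed.

Definition coefG (a b c d : C) (b0 b1 b2 b3 : bool) : C :=
 if (b0 == b1) && (b2 == b3) then (if b0 == b2 then (a+d)/2 else (a-d)/2)
 else if (b0 != b1) && (b2 != b3) then (if b0 == b2 then (b+c)/2 else (b-c)/2) else 0.

Lemma cGE a b c d b0 b1 b2 b3 :
  (G a b c d)@_(M4 b0 b1 b2 b3) = coefG a b c d b0 b1 b2 b3.
Proof.
rewrite Gnf !(mcoeffD, mcoeffZ, mcoeffX) !eqM4 /coefG.
by case: b0; case: b1; case: b2; case: b3 => /=; ring.
Qed.

Lemma msupp_nonempty {p : Pol} : p != 0 -> exists m, m \in msupp p.
Proof.
move=> p0; case E: (msupp p) => [|m s]; last by exists m; rewrite mem_head.
case/eqP: p0; apply/mpolyP => m; rewrite mcoeff0; apply/eqP.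
by rewrite mcoeff_eq0 E.
Qed.

Lemma seq_argmax (T : eqType) (f : T -> int) (s : seq T) x :
  x \in s -> exists2 m, m \in s & forall y, y \in s -> f y <= f m.
Proof.
elim: s x => [//|y s IH] x _.
case: s IH => [|z s] IH.
  by exists y; rewrite ?mem_head // => y'; rewrite inE => /eqP->.
have [m ms mmax] := IH z (mem_head _ _).
case: (leP (f y) (f m)) => h.
  exists m; first by rewrite inE ms orbT.
  by move=> y'; rewrite inE => /orP[/eqP->//|]; apply: mmax.
exists y; first by rewrite mem_head.
move=> y'; rewrite inE => /orP[/eqP->//|/mmax hy].
exact: le_trans hy (ltW h).
Qed.

Lemma mcoeff_sumX (s : seq 'X_{1..8}) (f : 'X_{1..8} -> C) m : uniq s ->
  (\sum_(m' <- s) f m' *: ('X_[m'] : Pol))@_m = if m \in s then f m else 0.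
Proof.
elim: s => [|y s IH] /=; first by rewrite big_nil mcoeff0.
case/andP=> ys us; rewrite big_cons mcoeffD mcoeffZ mcoeffX IH // in_cons.
case: (eqVneq y m) => [eym|ne]; first by subst y; rewrite (negbTE ys) /= mulr1 addr0.
by rewrite mulr0 add0r.
Qed.

Definition filt (P : pred 'X_{1..8}) (p : Pol) : Pol :=
  \sum_(m <- msupp p) (if P m then p@_m else 0) *: 'X_[m].

Lemma mcoeff_filt P p m : (filt P p)@_m = if P m then p@_m else 0.
Proof.
rewrite mcoeff_sumX ?msupp_uniq //; case: ifP => // /negbT.
by rewrite -mcoeff_eq0 => /eqP ->; case: (P m).
Qed.

Lemma supp_mul {p q : Pol} {m} : m \in msupp (p * q) ->
  exists m1 m2, [/\ m1 \in msupp p, m2 \in msupp q & m = (m1 + m2)%MM].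
Proof.
have [/hasP[x /allpairsP[y [y1 y2 ->]] /= /eqP <-]|H] :=
  boolP (has (fun x : 'X_{1..8} * 'X_{1..8} => (x.1 + x.2 == m)%MM)
             (allpairs pair (msupp p) (msupp q))).
  by move=> _; exists y.1, y.2.
rewrite -[m \in _]negbK -mcoeff_eq0 mpolyME raddf_sum /= big1_seq ?eqxx //.
move=> x /andP[_ xin]; rewrite mcoeffZ mcoeffX.
by move/hasPn: H => /(_ x xin) /negbTE ->; rewrite mulr0.
Qed.

Section Top.
Variable phi : 'X_{1..8} -> int.
Hypothesis phiD : forall m1 m2, phi (m1 + m2)%MM = phi m1 + phi m2.

Lemma top_mul (p q : Pol) tp tq mp mq :
  mp \in msupp p -> phi mp = tp -> (forall m, m \in msupp p -> phi m <= tp) ->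
  mq \in msupp q -> phi mq = tq -> (forall m, m \in msupp q -> phi m <= tq) ->
  (exists2 m, m \in msupp (p * q) & phi m = tp + tq) /\
  (forall m, m \in msupp (p * q) -> phi m <= tp + tq).
Proof.
move=> hmp ep bp hmq eq bq; split; last first.
  by move=> m /supp_mul [m1 [m2 [h1 h2 ->]]]; rewrite phiD lerD ?bp ?bq.
pose pt := filt (fun m => phi m == tp) p.
pose qt := filt (fun m => phi m == tq) q.
have top_in (r : Pol) t n : n \in msupp (filt (fun m => phi m == t) r) -> phi n = t.
  rewrite -[n \in _]negbK -mcoeff_eq0 mcoeff_filt.
  by case: (eqVneq (phi n) t) => // _; rewrite eqxx.
have rest_in (r : Pol) t n : (forall m, m \in msupp r -> phi m <= t) ->
    n \in msupp (r - filt (fun m => phi m == t) r) -> phi n < t.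
  move=> br; rewrite -[n \in _]negbK -mcoeff_eq0 mcoeffB mcoeff_filt.
  case: (eqVneq (phi n) t) => [_|ne]; first by rewrite subrr eqxx.
  rewrite subr0 mcoeff_eq0 negbK => /br; rewrite le_eqVlt (negbTE ne) //.
have pt0 : pt != 0.
  apply/eqP => E; have := mcoeff_filt (fun m => phi m == tp) p mp.
  by rewrite -/pt E mcoeff0 ep eqxx => /esym/eqP; rewrite mcoeff_eq0 hmp.
have qt0 : qt != 0.
  apply/eqP => E; have := mcoeff_filt (fun m => phi m == tq) q mq.
  by rewrite -/qt E mcoeff0 eq eqxx => /esym/eqP; rewrite mcoeff_eq0 hmq.
have [m hm] := msupp_nonempty (mulf_neq0 pt0 qt0).
have [m1 [m2 [h1 h2 em]]] := supp_mul hm.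
have e1 := top_in _ _ _ h1; have e2 := top_in _ _ _ h2.
have em' : phi m = tp + tq by rewrite em phiD e1 e2.
exists m => //.
have -> : p * q = pt * qt + pt * (q - qt) + (p - pt) * q by ring.
rewrite -[m \in _]negbK -mcoeff_eq0 !mcoeffD.
have z1 : (pt * (q - qt))@_m = 0.
  apply/eqP; rewrite mcoeff_eq0; apply/negP => /supp_mul [n1 [n2 [k1 k2 E]]].
  have f1 := top_in _ _ _ k1; have f2 := rest_in _ _ _ bq k2.
  by move: em'; rewrite E phiD f1; lia.
have z2 : ((p - pt) * q)@_m = 0.
  apply/eqP; rewrite mcoeff_eq0; apply/negP => /supp_mul [n1 [n2 [k1 k2 E]]].
  have f1 := rest_in _ _ _ bp k1; have f2 := bq _ k2.
  by move: em'; rewrite E phiD; lia.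
by rewrite z1 z2 !addr0 mcoeff_eq0 negbK.
Qed.
End Top.

Definition wn (i : 'I_4) (m : 'X_{1..8}) : nat := (m (xi i) + m (yi i))%N.

Lemma wn_mon c i : wn i (mon c) = 1%N.
Proof. by rewrite /wn mon_xi mon_yi; case: (c i). Qed.

Lemma suppG a b c d m : m \in msupp (G a b c d) -> exists x, m = mon x.
Proof.
rewrite -[m \in _]negbK -mcoeff_eq0 Gnf !(mcoeffD, mcoeffZ, mcoeffX).
case: (eqVneq (M4 true true true true) m) => [<-|_]; first by eexists.
case: (eqVneq (M4 false false false false) m) => [<-|_]; first by eexists.
case: (eqVneq (M4 true true false false) m) => [<-|_]; first by eexists.
case: (eqVneq (M4 false false true true) m) => [<-|_]; first by eexists.
case: (eqVneq (M4 true false true false) m) => [<-|_]; first by eexists.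
case: (eqVneq (M4 false true false true) m) => [<-|_]; first by eexists.
case: (eqVneq (M4 true false false true) m) => [<-|_]; first by eexists.
case: (eqVneq (M4 false true true false) m) => [<-|_]; first by eexists.
by rewrite /= !mulr0n !addr0 !mulr0 !addr0 eqxx.
Qed.

Lemma suppG_wn {a b c d m} i : m \in msupp (G a b c d) -> wn i m = 1%N.
Proof. by case/suppG => x ->; rewrite wn_mon. Qed.

Lemma homog_split a b c d (g h : Pol) : G a b c d = g * h -> G a b c d != 0 ->
  forall i, exists e : bool,
    (forall m, m \in msupp g -> wn i m = e) /\ (forall m, m \in msupp h -> wn i m = ~~ e).
Proof.
move=> Ggh G0 i.
have g0 : g != 0 by apply: contraNneq G0 => g0; rewrite Ggh g0 mul0r.
have h0 : h != 0 by apply: contraNneq G0 => h0; rewrite Ggh h0 mulr0.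
pose p1 := fun m => (wn i m)%:Z.
pose p2 := fun m => - (wn i m)%:Z.
have p1D : forall m1 m2, p1 (m1 + m2)%MM = p1 m1 + p1 m2.
  by move=> m1 m2; rewrite /p1 /wn !mnmDE; lia.
have p2D : forall m1 m2, p2 (m1 + m2)%MM = p2 m1 + p2 m2.
  by move=> m1 m2; rewrite /p2 /wn !mnmDE; lia.
have [xg xgin] := msupp_nonempty g0.
have [xh xhin] := msupp_nonempty h0.
have [mg1 mg1in bg1] := @seq_argmax _ p1 _ _ xgin.
have [mh1 mh1in bh1] := @seq_argmax _ p1 _ _ xhin.
have [mg2 mg2in bg2] := @seq_argmax _ p2 _ _ xgin.
have [mh2 mh2in bh2] := @seq_argmax _ p2 _ _ xhin.
have [[m1 m1in em1] _] := @top_mul p1 p1D g h _ _ mg1 mh1 mg1in erefl bg1 mh1in erefl bh1.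
have [[m2 m2in em2] _] := @top_mul p2 p2D g h _ _ mg2 mh2 mg2in erefl bg2 mh2in erefl bh2.
rewrite -Ggh in m1in m2in.
move: em1 em2; rewrite /p1 /p2 !(suppG_wn _ m1in) !(suppG_wn _ m2in) => em1 em2.
have Hg1 := bg1 _ mg2in; have Hh1 := bh1 _ mh2in.
rewrite /p1 /p2 in em1 em2 Hg1 Hh1.
have [eA eB] : wn i mg2 = wn i mg1 /\ wn i mh2 = wn i mh1.
  move: em1 em2 Hg1 Hh1; clear; lia.
have Ab : (wn i mg1 <= 1)%N by move: em1; clear; lia.
exists (wn i mg1 == 1%N); split => m min.
  have := bg1 _ min; have := bg2 _ min; rewrite /p1 /p2 eA.
  move: Ab; clear; case: eqP => /= E; lia.
have := bh1 _ min; have := bh2 _ min; rewrite /p1 /p2 eB.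
move: Ab em1; clear; case: eqP => /= E; lia.
Qed.

Lemma const_unit (g : Pol) : g != 0 ->
  (forall m, m \in msupp g -> forall i, wn i m = 0%N) -> g \is a GRing.unit.
Proof.
move=> g0 H.
have m0 m : m \in msupp g -> m = 0%MM.
  move=> min; apply/mnmP => k; rewrite mnm0E.
  have [i [->|->]] := pair_of k; have := H m min i; rewrite /wn; lia.
have gE : g = (g@_0%MM)%:MP.
  apply/mpolyP => m; rewrite mcoeffC.
  case: (eqVneq m 0%MM) => [->|ne]; first by rewrite mulr1.
  rewrite mulr0; apply/eqP; rewrite mcoeff_eq0; apply/negP => /m0 E.
  by rewrite E eqxx in ne.
have c0 : g@_0%MM != 0.
  by apply: contraNneq g0 => c0; rewrite gE c0 mpolyC0.
apply/unitrP; exists ((g@_0%MM)^-1)%:MP; rewrite gE -!mpolyCM mcoeffC eqxx mulr1.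
by rewrite mulVf // mulfV // mpolyC1.
Qed.

Definition vanish (E : 'I_4 -> bool) (m : 'X_{1..8}) :=
  forall i, ~~ E i -> m (xi i) = 0%N /\ m (yi i) = 0%N.

Lemma vanish_part E c : vanish E (part E c).
Proof. by move=> i /negbTE Ei; rewrite part_xi part_yi Ei. Qed.

Lemma decomp E m1 m2 A B :
  vanish E m1 -> vanish (fun i => ~~ E i) m2 ->
  vanish E A -> vanish (fun i => ~~ E i) B ->
  (m1 + m2 == A + B)%MM = (m1 == A) && (m2 == B).
Proof.
move=> v1 v2 vA vB; apply/eqP/andP => [Heq|[/eqP-> /eqP->]//].
have hk k : m1 k = A k /\ m2 k = B k.
  have := congr1 (fun m : 'X_{1..8} => m k) Heq; rewrite /= !mnmDE.
  have [i [->|->]] := pair_of k; case Ei: (E i).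
  - have := v2 i; have := vB i; rewrite Ei /= => /(_ isT) [-> _] /(_ isT) [-> _]; lia.
  - have := v1 i; have := vA i; rewrite Ei /= => /(_ isT) [-> _] /(_ isT) [-> _]; lia.
  - have := v2 i; have := vB i; rewrite Ei /= => /(_ isT) [_ ->] /(_ isT) [_ ->]; lia.
  - have := v1 i; have := vA i; rewrite Ei /= => /(_ isT) [_ ->] /(_ isT) [_ ->]; lia.
by split; apply/eqP/mnmP => k; case: (hk k).
Qed.

Lemma coef_sum (g : Pol) A : \sum_(x <- msupp g) g@_x * (x == A)%:R = g@_A.
Proof.
have := congr1 (mcoeff A) (mpolyE g); rewrite raddf_sum /= => ->.
by apply: eq_bigr => x _; rewrite mcoeffZ mcoeffX.
Qed.

Lemma coefM E (g h : Pol) A B :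
  (forall m, m \in msupp g -> vanish E m) ->
  (forall m, m \in msupp h -> vanish (fun i => ~~ E i) m) ->
  vanish E A -> vanish (fun i => ~~ E i) B ->
  (g * h)@_(A + B)%MM = g@_A * h@_B.
Proof.
move=> vg vh vA vB.
rewrite mpolyME raddf_sum /= big_allpairs -(coef_sum g) -(coef_sum h) big_distrl /=.
apply: eq_big_seq => x xin; rewrite big_distrr /=; apply: eq_big_seq => y yin.
rewrite mcoeffZ mcoeffX /= (@decomp E _ _ _ _ (vg _ xin) (vh _ yin) vA vB).
by case: (x == A); case: (y == B); rewrite /= ?mulr0 ?mulr1 ?mul0r.
Qed.

Lemma mon_split E x : mon x = (part E x + part (fun i => ~~ E i) x)%MM.
Proof. by rewrite /mon /part (bigID E). Qed.

Definition mix (E c c' : 'I_4 -> bool) := fun i => if E i then c i else c' i.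

Lemma part_mixl E c c' : part E (mix E c c') = part E c.
Proof. by apply: eq_bigr => i Ei; rewrite /mix Ei. Qed.
Lemma part_mixr E c c' : part (fun i => ~~ E i) (mix E c c') = part (fun i => ~~ E i) c'.
Proof. by apply: eq_bigr => i /negbTE Ei; rewrite /mix Ei. Qed.

Lemma KL a b c d (g h : Pol) E : G a b c d = g * h ->
  (forall m, m \in msupp g -> vanish E m) ->
  (forall m, m \in msupp h -> vanish (fun i => ~~ E i) m) ->
  forall x y, (G a b c d)@_(mon (mix E x y)) * (G a b c d)@_(mon (mix E y x))
            = (G a b c d)@_(mon x) * (G a b c d)@_(mon y).
Proof.
move=> Ggh vg vh x y.
rewrite !(mon_split E) !part_mixl !part_mixr Ggh.
rewrite !(@coefM E g h _ _ vg vh); try apply: vanish_part.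
ring.
Qed.

Definition cond2 (a b c d : C) : Prop :=
  ((a ^+ 2 = b ^+ 2 /\ b ^+ 2 = c ^+ 2 /\ c ^+ 2 = d ^+ 2) \/
      [\/ [/\ a = 0, b = 0 & c = 0], [/\ a = 0, b = 0 & d = 0],
          [/\ a = 0, c = 0 & d = 0] | [/\ b = 0, c = 0 & d = 0]]).

Lemma sq0 {x : C} : x * x = 0 -> x = 0.
Proof. by move/eqP; rewrite mulf_eq0 orbb => /eqP. Qed.

Lemma sqsub {x y : C} : x * x - y * y = 0 -> x - y = 0 \/ x + y = 0.
Proof.
move=> h; have : (x - y) * (x + y) = 0 by rewrite -h; ring.
by move/eqP; rewrite mulf_eq0 => /orP[/eqP|/eqP]; [left|right].
Qed.

Lemma mul0l {x y : C} : x != 0 -> x * y = 0 -> y = 0.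
Proof. by move=> x0 /eqP; rewrite mulf_eq0 (negbTE x0) => /eqP. Qed.

Ltac zfrom h := match type of h with ?L = ?R =>
  first [ apply: (@etrans _ _ (L - R)); [ring | by rewrite h subrr]
        | apply: (@etrans _ _ (R - L)); [ring | by rewrite h subrr] ] end.
Ltac zauto := first [ ring | match goal with h : _ = _ |- _ = 0 => zfrom h end ].
Ltac zeq := apply/eqP; rewrite -subr_eq0; apply/eqP; zauto.

Lemma alg01 (p q r s : C) : p * p - q * q = 0 -> r * r - s * s = 0 ->
  p * r = 0 -> p * s = 0 -> q * r = 0 -> q * s = 0 ->
  cond2 (p + q) (r + s) (r - s) (p - q).
Proof.
move=> h1 h2 h3 h4 h5 h6; right.
case: (eqVneq p 0) => [p0|p0].
  subst p; have q0 : q = 0 by apply: sq0; zauto.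
  subst q; have [e|e] := sqsub h2.
    by constructor 3; split; rewrite ?e //; ring.
  by constructor 2; split; rewrite ?e //; ring.
have r0 := mul0l p0 h3; have s0 := mul0l p0 h4; subst r s.
have [e|e] := sqsub h1.
  by constructor 4; split; rewrite ?e //; ring.
by constructor 1; split; rewrite ?e //; ring.
Qed.

Lemma alg02 (p q r s : C) : p * p - r * r = 0 -> q * q - s * s = 0 ->
  p * q = 0 -> p * s = 0 -> q * r = 0 -> r * s = 0 ->
  cond2 (p + q) (r + s) (r - s) (p - q).
Proof.
move=> h1 h2 h3 h4 h5 h6; left.
case: (eqVneq p 0) => [p0|p0].
  subst p; have r0 : r = 0 by apply: sq0; zauto.
  by subst r; split; [|split]; zeq.
have q0 := mul0l p0 h3; have s0 := mul0l p0 h4; subst q s.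
by split; [|split]; zeq.
Qed.

Lemma alg03 (p q r s : C) : p * p - s * s = 0 -> q * q - r * r = 0 ->
  p * q = 0 -> p * r = 0 -> s * q = 0 -> s * r = 0 ->
  cond2 (p + q) (r + s) (r - s) (p - q).
Proof.
move=> h1 h2 h3 h4 h5 h6; left.
case: (eqVneq p 0) => [p0|p0].
  subst p; have s0 : s = 0 by apply: sq0; zauto.
  by subst s; split; [|split]; zeq.
have q0 := mul0l p0 h3; have r0 := mul0l p0 h4; subst q r.
by split; [|split]; zeq.
Qed.

Lemma algS (p q r s : C) : p * p = 0 -> q * q = 0 -> r * r = 0 -> s * s = 0 ->
  [/\ p + q = 0, r + s = 0, r - s = 0 & p - q = 0].
Proof.
move=> /sq0 -> /sq0 -> /sq0 -> /sq0 ->; split; ring.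
Qed.

Lemma two_neq0 : (2 : C) != 0.
Proof. by rewrite pnatr_eq0. Qed.

Lemma halfA (a d : C) : (a + d) / 2 + (a - d) / 2 = a.
Proof. by field. Qed.
Lemma halfB (a d : C) : (a + d) / 2 - (a - d) / 2 = d.
Proof. by field. Qed.

Lemma alg01' (a b c d : C) :
  (a+d)/2 * ((a+d)/2) - (a-d)/2 * ((a-d)/2) = 0 ->
  (b+c)/2 * ((b+c)/2) - (b-c)/2 * ((b-c)/2) = 0 ->
  (a+d)/2 * ((b+c)/2) = 0 -> (a+d)/2 * ((b-c)/2) = 0 ->
  (a-d)/2 * ((b+c)/2) = 0 -> (a-d)/2 * ((b-c)/2) = 0 -> cond2 a b c d.
Proof.
move=> h1 h2 h3 h4 h5 h6.
by have := @alg01 _ _ _ _ h1 h2 h3 h4 h5 h6; rewrite !halfA !halfB.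
Qed.

Lemma alg02' (a b c d : C) :
  (a+d)/2 * ((a+d)/2) - (b+c)/2 * ((b+c)/2) = 0 ->
  (a-d)/2 * ((a-d)/2) - (b-c)/2 * ((b-c)/2) = 0 ->
  (a+d)/2 * ((a-d)/2) = 0 -> (a+d)/2 * ((b-c)/2) = 0 ->
  (a-d)/2 * ((b+c)/2) = 0 -> (b+c)/2 * ((b-c)/2) = 0 -> cond2 a b c d.
Proof.
move=> h1 h2 h3 h4 h5 h6.
by have := @alg02 _ _ _ _ h1 h2 h3 h4 h5 h6; rewrite !halfA !halfB.
Qed.

Lemma alg03' (a b c d : C) :
  (a+d)/2 * ((a+d)/2) - (b-c)/2 * ((b-c)/2) = 0 ->
  (a-d)/2 * ((a-d)/2) - (b+c)/2 * ((b+c)/2) = 0 ->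
  (a+d)/2 * ((a-d)/2) = 0 -> (a+d)/2 * ((b+c)/2) = 0 ->
  (b-c)/2 * ((a-d)/2) = 0 -> (b-c)/2 * ((b+c)/2) = 0 -> cond2 a b c d.
Proof.
move=> h1 h2 h3 h4 h5 h6.
by have := @alg03 _ _ _ _ h1 h2 h3 h4 h5 h6; rewrite !halfA !halfB.
Qed.

Lemma algS' (a b c d : C) :
  (a+d)/2 * ((a+d)/2) = 0 -> (a-d)/2 * ((a-d)/2) = 0 ->
  (b+c)/2 * ((b+c)/2) = 0 -> (b-c)/2 * ((b-c)/2) = 0 ->
  a = 0 /\ b = 0 /\ c = 0 /\ d = 0.
Proof.
move=> h1 h2 h3 h4; have [] := @algS _ _ _ _ h1 h2 h3 h4; rewrite !halfA !halfB.
by move=> -> -> -> ->.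
Qed.

Definition K4prop (a b c d : C) (e0 e1 e2 e3 : bool) :=
  forall c0 c1 c2 c3 c0' c1' c2' c3' : bool,
  coefG a b c d (if e0 then c0 else c0') (if e1 then c1 else c1')
                (if e2 then c2 else c2') (if e3 then c3 else c3') *
  coefG a b c d (if e0 then c0' else c0) (if e1 then c1' else c1)
                (if e2 then c2' else c2) (if e3 then c3' else c3) =
  coefG a b c d c0 c1 c2 c3 * coefG a b c d c0' c1' c2' c3'.

Lemma final_alg a b c d e0 e1 e2 e3 :
  ~ (a = 0 /\ b = 0 /\ c = 0 /\ d = 0) ->
  [|| e0, e1, e2 | e3] -> [|| ~~ e0, ~~ e1, ~~ e2 | ~~ e3] ->
  K4prop a b c d e0 e1 e2 e3 -> cond2 a b c d.
Proof.
move=> nz nf nt K.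
have h1 := K true true true true false false false false.
have h2 := K true true false false false false true true.
have h3 := K true false true false false true false true.
have h4 := K true false false true false true true false.
have h5 := K true true true true true true false false.
have h6 := K true true true true true false true false.
have h7 := K true true true true true false false true.
have h8 := K true true false false true false true false.
have h9 := K true true false false true false false true.
have h10 := K true false true false true false false true.
move: K nf nt h1 h2 h3 h4 h5 h6 h7 h8 h9 h10.
case: e0; case: e1; case: e2; case: e3 => //= _ _ _;
  rewrite /coefG /= => h1 h2 h3 h4 h5 h6 h7 h8 h9 h10.
- by exfalso; apply: nz; apply: algS'; zauto.
- by exfalso; apply: nz; apply: algS'; zauto.
- by apply: alg01'; zauto.
- by exfalso; apply: nz; apply: algS'; zauto.
- by apply: alg02'; zauto.
- by apply: alg03'; zauto.
- by exfalso; apply: nz; apply: algS'; zauto.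
- by exfalso; apply: nz; apply: algS'; zauto.
- by apply: alg03'; zauto.
- by apply: alg02'; zauto.
- by exfalso; apply: nz; apply: algS'; zauto.
- by apply: alg01'; zauto.
- by exfalso; apply: nz; apply: algS'; zauto.
- by exfalso; apply: nz; apply: algS'; zauto.
Qed.


Lemma mon_ext x y : x =1 y -> mon x = mon y.
Proof. by move=> e; apply: eq_bigr => i _; rewrite e. Qed.

Lemma mix_cf4 E c0 c1 c2 c3 c0' c1' c2' c3' :
  mon (mix E (cf4 c0 c1 c2 c3) (cf4 c0' c1' c2' c3')) =
  M4 (if E i0 then c0 else c0') (if E i1 then c1 else c1')
     (if E i2 then c2 else c2') (if E i3 then c3 else c3').
Proof.
apply: mon_ext => i; rewrite /mix.
by case: (ord4 i) => ->; rewrite !(cf4_0, cf4_1, cf4_2, cf4_3).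
Qed.

Lemma H1 a b c d : ~ (a = 0 /\ b = 0 /\ c = 0 /\ d = 0) ->
  reducible (G a b c d) -> cond2 a b c d.
Proof.
move=> nz [G0 Gnu [g [h [Ggh gnu hnu]]]].
have g0 : g != 0 by apply: contraNneq G0 => g0; rewrite Ggh g0 mul0r.
have h0 : h != 0 by apply: contraNneq G0 => h0; rewrite Ggh h0 mulr0.
have [mg0 mg0in] := msupp_nonempty g0.
pose E i := wn i mg0 == 1%N.
have hgh : forall i, (forall m, m \in msupp g -> wn i m = E i) /\
                     (forall m, m \in msupp h -> wn i m = ~~ E i).
  move=> i; have [e [Hg Hh]] := @homog_split _ _ _ _ _ _ Ggh G0 i.
  have Ee : E i = e by rewrite /E (Hg _ mg0in); case: (e).
  by rewrite Ee.
have vg : forall m, m \in msupp g -> vanish E m.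
  move=> m min i /negbTE nE; have := (hgh i).1 m min; rewrite nE /wn.
  by move=> H; split; lia.
have vh : forall m, m \in msupp h -> vanish (fun i => ~~ E i) m.
  move=> m min i; rewrite negbK => nE; have := (hgh i).2 m min; rewrite nE /wn.
  by move=> H; split; lia.
have nf : [|| E i0, E i1, E i2 | E i3].
  apply/negPn/negP => /norP[/negbTE e0 /norP[/negbTE e1 /norP[/negbTE e2 /negbTE e3]]].
  move/negP: gnu; apply; apply: const_unit => // m min i.
  by rewrite (hgh i).1 //; case: (ord4 i) => ->; rewrite ?e0 ?e1 ?e2 ?e3.
have nt : [|| ~~ E i0, ~~ E i1, ~~ E i2 | ~~ E i3].
  apply/negPn/negP => /norP[/negbNE e0 /norP[/negbNE e1 /norP[/negbNE e2 /negbNE e3]]].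
  move/negP: hnu; apply; apply: const_unit => // m min i.
  by rewrite (hgh i).2 //; case: (ord4 i) => ->; rewrite ?e0 ?e1 ?e2 ?e3.
have K := @KL _ _ _ _ _ _ E Ggh vg vh.
apply: (@final_alg _ _ _ _ _ _ _ _ nz nf nt) => c0 c1 c2 c3 c0' c1' c2' c3'.
by rewrite -!cGE -!mix_cf4 K.
Qed.

Lemma half_odd n : ((n.*2).+1)./2 = n. Proof. by rewrite /= uphalf_double. Qed.

Lemma subst_x M s i : subst_var M s (xi i) =
  M i (inord 0) (inord 0) *: X (s i) + M i (inord 0) (inord 1) *: Y (s i).
Proof. by rewrite /subst_var val_xi mul2n doubleK odd_double inord_val. Qed.
Lemma subst_y M s i : subst_var M s (yi i) =
  M i (inord 1) (inord 0) *: X (s i) + M i (inord 1) (inord 1) *: Y (s i).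
Proof. by rewrite /subst_var val_yi mul2n half_odd /= odd_double inord_val. Qed.

Lemma act_X M s i : Defs.act M s (X i) =
  M i (inord 0) (inord 0) *: X (s i) + M i (inord 0) (inord 1) *: Y (s i).
Proof. by rewrite /Defs.act /X comp_mpolyXU -(tnth_nth 0) tnth_mktuple subst_x. Qed.
Lemma act_Y M s i : Defs.act M s (Y i) =
  M i (inord 1) (inord 0) *: X (s i) + M i (inord 1) (inord 1) *: Y (s i).
Proof. by rewrite /Defs.act /Y comp_mpolyXU -(tnth_nth 0) tnth_mktuple subst_y. Qed.

Lemma act_rM M s p q : Defs.act M s (p * q) = Defs.act M s p * Defs.act M s q.
Proof. exact: rmorphM. Qed.
Lemma act_rB M s p q : Defs.act M s (p - q) = Defs.act M s p - Defs.act M s q.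
Proof. exact: rmorphB. Qed.

Lemma act_q0 M s : Defs.act M s q0 =
  (Defs.act M s (X i0) * Defs.act M s (X i1) - Defs.act M s (Y i0) * Defs.act M s (Y i1)) *
  (Defs.act M s (X i2) * Defs.act M s (X i3) - Defs.act M s (Y i2) * Defs.act M s (Y i3)).
Proof. by rewrite /q0 !(act_rM, act_rB). Qed.

Lemma eval_subst M s k : (subst_var M s k).@[fun _ => 0] = 0.
Proof. by rewrite /subst_var !(mevalD, mevalZ) /X /Y !mevalXU !mulr0 addr0. Qed.

Lemma eval_act M s p : (Defs.act M s p).@[fun _ => 0] = p.@[fun _ => 0].
Proof.
rewrite /Defs.act comp_mpoly_meval; apply: meval_eq => k.
by rewrite tnth_mktuple eval_subst.
Qed.

Lemma nonunit0 (p : Pol) : p.@[fun _ => 0] = 0 -> p \isn't a GRing.unit.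
Proof.
move=> p0; apply/negP => /(@unitrP _ p) [q [qp _]].
have := congr1 (meval (fun _ => 0)) qp; rewrite mevalM p0 mulr0 meval1.
by move/eqP; rewrite eq_sym oner_eq0.
Qed.

Lemma evalX i : (X i).@[fun _ => 0] = 0 :> C. Proof. exact: mevalXU. Qed.
Lemma evalY i : (Y i).@[fun _ => 0] = 0 :> C. Proof. exact: mevalXU. Qed.
Lemma evsum (c1 c2 c3 c4 : C) (p1 p2 p3 p4 p5 p6 p7 p8 : Pol) :
  p1.@[fun _ => 0] = 0 -> p2.@[fun _ => 0] = 0 -> p3.@[fun _ => 0] = 0 ->
  p4.@[fun _ => 0] = 0 -> p5.@[fun _ => 0] = 0 -> p6.@[fun _ => 0] = 0 ->
  p7.@[fun _ => 0] = 0 -> p8.@[fun _ => 0] = 0 ->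
  (c1 *: (p1 + p2) + c2 *: (p3 + p4) + c3 *: (p5 + p6) + c4 *: (p7 + p8)).@[fun _ => 0] = 0.
Proof.
move=> e1 e2 e3 e4 e5 e6 e7 e8.
by rewrite !(mevalD, mevalZ) e1 e2 e3 e4 e5 e6 e7 e8 !addr0 !mulr0 !addr0.
Qed.
Lemma ev4 (p1 p2 p3 q : Pol) : q.@[fun _ => 0] = 0 -> (p1 * p2 * p3 * q).@[fun _ => 0] = 0.
Proof. by move=> e; rewrite mevalM e mulr0. Qed.
Lemma evq (p1 p2 q1 q2 : Pol) : q1.@[fun _ => 0] = 0 -> q2.@[fun _ => 0] = 0 ->
  (p1 * q1 - p2 * q2).@[fun _ => 0] = 0.
Proof. by move=> e1 e2; rewrite mevalB !mevalM e1 e2 !mulr0 subrr. Qed.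
Lemma evZ (c : C) (p : Pol) : p.@[fun _ => 0] = 0 -> (c *: p).@[fun _ => 0] = 0.
Proof. by move=> e; rewrite mevalZ e mulr0. Qed.

Ltac evXY := lazymatch goal with
  | |- (X _).@[_] = _ => exact: evalX
  | |- (Y _).@[_] = _ => exact: evalY end.

Lemma evalG a b c d : (G a b c d).@[fun _ => 0] = 0.
Proof. by rewrite /G; apply: evsum; apply: ev4; evXY. Qed.

Lemma H3 a b c d : G a b c d != 0 -> in_proj_orbit (G a b c d) q0 ->
  reducible (G a b c d).
Proof.
move=> G0 [M [s [lam [_ lam0 GE]]]]; split => //; first exact: nonunit0 (evalG _ _ _ _).
exists (lam *: Defs.act M s (X i0 * X i1 - Y i0 * Y i1)),
       (Defs.act M s (X i2 * X i3 - Y i2 * Y i3)).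
split.
- by rewrite GE /q0 act_rM scalerAl.
- apply: nonunit0; apply: evZ; rewrite eval_act.
  by apply: evq; evXY.
- apply: nonunit0; rewrite eval_act.
  by apply: evq; evXY.
Qed.

Definition jj : C := 'i.
Lemma jj2 : jj * jj = -1. Proof. exact: Num.Theory.mulCii. Qed.

Definition mk2 (e00 e01 e10 e11 : C) : 'M[C]_2 :=
  \matrix_(r < 2, c < 2) if (r:nat) == 0%N then (if (c:nat) == 0%N then e00 else e01)
                          else (if (c:nat) == 0%N then e10 else e11).

Lemma det_mk2 e00 e01 e10 e11 : \det (mk2 e00 e01 e10 e11) = e00 * e11 - e01 * e10.
Proof.
rewrite (expand_det_row _ 0) !big_ord_recr big_ord0 /= /cofactor.
by rewrite !det_mx11 !mxE /= expr0 expr1 mul1r mulN1r add0r mulrN.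
Qed.
Lemma mk2E00 e00 e01 e10 e11 : mk2 e00 e01 e10 e11 (inord 0) (inord 0) = e00.
Proof. by rewrite mxE !inordK. Qed.
Lemma mk2E01 e00 e01 e10 e11 : mk2 e00 e01 e10 e11 (inord 0) (inord 1) = e01.
Proof. by rewrite mxE !inordK. Qed.
Lemma mk2E10 e00 e01 e10 e11 : mk2 e00 e01 e10 e11 (inord 1) (inord 0) = e10.
Proof. by rewrite mxE !inordK. Qed.
Lemma mk2E11 e00 e01 e10 e11 : mk2 e00 e01 e10 e11 (inord 1) (inord 1) = e11.
Proof. by rewrite mxE !inordK. Qed.

Definition mI := mk2 1 0 0 1.
Definition mJ := mk2 jj 0 0 (- jj).
Definition mW := mk2 0 1 (-1) 0.
Lemma det_mI : \det mI = 1. Proof. by rewrite det_mk2; ring. Qed.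
Lemma det_mJ : \det mJ = 1. Proof. by rewrite det_mk2 mulrN jj2; ring. Qed.
Lemma det_mW : \det mW = 1. Proof. by rewrite det_mk2; ring. Qed.

Definition Mf (m0 m1 m2 m3 : 'M[C]_2) : 'I_4 -> 'M[C]_2 :=
  fun i => nth m0 [:: m0; m1; m2; m3] i.
Lemma Mf_0 m0 m1 m2 m3 : Mf m0 m1 m2 m3 i0 = m0. Proof. by rewrite /Mf vi0. Qed.
Lemma Mf_1 m0 m1 m2 m3 : Mf m0 m1 m2 m3 i1 = m1. Proof. by rewrite /Mf vi1. Qed.
Lemma Mf_2 m0 m1 m2 m3 : Mf m0 m1 m2 m3 i2 = m2. Proof. by rewrite /Mf vi2. Qed.
Lemma Mf_3 m0 m1 m2 m3 : Mf m0 m1 m2 m3 i3 = m3. Proof. by rewrite /Mf vi3. Qed.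

Lemma det_Mf m0 m1 m2 m3 : \det m0 = 1 -> \det m1 = 1 -> \det m2 = 1 -> \det m3 = 1 ->
  forall i, \det (Mf m0 m1 m2 m3 i) = 1.
Proof. by move=> h0 h1 h2 h3 i; case: (ord4 i) => ->; rewrite ?Mf_0 ?Mf_1 ?Mf_2 ?Mf_3. Qed.

Lemma two_half (x : C) : 2 * (x / 2) = x.
Proof. by field. Qed.

Lemma G2gen (s1 s2 s3 s4 : C) (P1 P2 P3 P4 : Pol) :
  (2 : C) *: ((s1 / 2) *: P1 + (s2 / 2) *: P2 + (s3 / 2) *: P3 + (s4 / 2) *: P4)
  = s1 *: P1 + s2 *: P2 + s3 *: P3 + s4 *: P4.
Proof. by rewrite !scalerDr !scalerA !two_half. Qed.

Definition Gg (x y : 'I_4 -> Pol) (a b c d : C) : Pol :=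
    ((a + d) / 2) *: (x i0 * x i1 * x i2 * x i3 + y i0 * y i1 * y i2 * y i3)
  + ((a - d) / 2) *: (x i0 * x i1 * y i2 * y i3 + y i0 * y i1 * x i2 * x i3)
  + ((b + c) / 2) *: (x i0 * y i1 * x i2 * y i3 + y i0 * x i1 * y i2 * x i3)
  + ((b - c) / 2) *: (x i0 * y i1 * y i2 * x i3 + y i0 * x i1 * x i2 * y i3).

Lemma G2g x y a b c d : (2 : C) *: Gg x y a b c d =
    (a + d) *: (x i0 * x i1 * x i2 * x i3 + y i0 * y i1 * y i2 * y i3)
  + (a - d) *: (x i0 * x i1 * y i2 * y i3 + y i0 * y i1 * x i2 * x i3)
  + (b + c) *: (x i0 * y i1 * x i2 * y i3 + y i0 * x i1 * y i2 * x i3)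
  + (b - c) *: (x i0 * y i1 * y i2 * x i3 + y i0 * x i1 * x i2 * y i3).
Proof. exact: G2gen. Qed.

Definition Ag (M : 'I_4 -> 'M[C]_2) (s : {perm 'I_4}) (x y : 'I_4 -> Pol) i :=
  M i (inord 0) (inord 0) *: x (s i) + M i (inord 0) (inord 1) *: y (s i).
Definition Bg (M : 'I_4 -> 'M[C]_2) (s : {perm 'I_4}) (x y : 'I_4 -> Pol) i :=
  M i (inord 1) (inord 0) *: x (s i) + M i (inord 1) (inord 1) *: y (s i).
Definition fac M s x y u v := Ag M s x y u * Ag M s x y v - Bg M s x y u * Bg M s x y v.
Definition q0g (x y : 'I_4 -> Pol) :=
  (x i0 * x i1 - y i0 * y i1) * (x i2 * x i3 - y i2 * y i3).
Definition Q M s x y := fac M s x y i0 i1 * fac M s x y i2 i3.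

Lemma act_q0g M s x y : Defs.act M s (q0g x y) =
  q0g (fun i => Defs.act M s (x i)) (fun i => Defs.act M s (y i)).
Proof. by rewrite /q0g !(act_rM, act_rB). Qed.

Lemma eq_q0g x y x' y' : x =1 x' -> y =1 y' -> q0g x y = q0g x' y'.
Proof. by move=> ex ey; rewrite /q0g !ex !ey. Qed.

Lemma act_q0E M s : Defs.act M s q0 = Q M s X Y.
Proof.
rewrite (_ : q0 = q0g X Y) // act_q0g.
by apply: eq_q0g => i; [exact: act_X | exact: act_Y]. Qed.

Lemma fac_II M s x y u v : M u = mI -> M v = mI ->
  fac M s x y u v = x (s u) * x (s v) - y (s u) * y (s v).
Proof.
move=> hu hv; rewrite /fac /Ag /Bg hu hv /mI !mk2E00 !mk2E01 !mk2E10 !mk2E11.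
by rewrite !scale1r !scale0r !addr0 !add0r.
Qed.
Lemma fac_JI M s x y u v : M u = mJ -> M v = mI ->
  fac M s x y u v = jj *: (x (s u) * x (s v) + y (s u) * y (s v)).
Proof.
move=> hu hv; rewrite /fac /Ag /Bg hu hv /mI /mJ !mk2E00 !mk2E01 !mk2E10 !mk2E11.
rewrite !scale1r !scale0r !addr0 !add0r -!mul_mpolyC; ring.
Qed.
Lemma fac_IW M s x y u v : M u = mI -> M v = mW ->
  fac M s x y u v = x (s u) * y (s v) + y (s u) * x (s v).
Proof.
move=> hu hv; rewrite /fac /Ag /Bg hu hv /mI /mW !mk2E00 !mk2E01 !mk2E10 !mk2E11.
rewrite !scale1r !scale0r !addr0 !add0r -!mul_mpolyC; ring.
Qed.
Lemma fac_JW M s x y u v : M u = mJ -> M v = mW ->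
  fac M s x y u v = jj *: (x (s u) * y (s v) - y (s u) * x (s v)).
Proof.
move=> hu hv; rewrite /fac /Ag /Bg hu hv /mJ /mW !mk2E00 !mk2E01 !mk2E10 !mk2E11.
rewrite !scale1r !scale0r !addr0 !add0r -!mul_mpolyC; ring.
Qed.

Lemma jjM (P R : Pol) : (jj *: P) * (jj *: R) = - (P * R).
Proof. by rewrite -scalerAl -scalerAr scalerA jj2 scaleN1r. Qed.

Lemma orbit_of a b c d M s (lam2 : C) : (forall i, \det (M i) = 1) -> lam2 != 0 ->
  (2 : C) *: Gg X Y a b c d = lam2 *: Q M s X Y -> in_proj_orbit (G a b c d) q0.
Proof.
move=> hM l0 E; exists M, s, (lam2 / 2); split => //.
  by rewrite mulf_neq0 // invr_eq0 pnatr_eq0.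
apply: (@scalerI _ _ (2 : C)); first by rewrite pnatr_eq0.
by rewrite act_q0E scalerA two_half -E.
Qed.

Lemma n01 : i0 != i1. Proof. by rewrite -val_eqE /= vi0 vi1. Qed.
Lemma n02 : i0 != i2. Proof. by rewrite -val_eqE /= vi0 vi2. Qed.
Lemma n03 : i0 != i3. Proof. by rewrite -val_eqE /= vi0 vi3. Qed.
Lemma n12 : i1 != i2. Proof. by rewrite -val_eqE /= vi1 vi2. Qed.
Lemma n13 : i1 != i3. Proof. by rewrite -val_eqE /= vi1 vi3. Qed.
Lemma n23 : i2 != i3. Proof. by rewrite -val_eqE /= vi2 vi3. Qed.

Lemma s12_0 : tperm i1 i2 i0 = i0. Proof. by rewrite tpermD // eq_sym ?n01 ?n02. Qed.
Lemma s12_3 : tperm i1 i2 i3 = i3. Proof. by rewrite tpermD ?n13 ?n23. Qed.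
Lemma s13_0 : tperm i1 i3 i0 = i0. Proof. by rewrite tpermD // eq_sym ?n01 ?n03. Qed.
Lemma s13_2 : tperm i1 i3 i2 = i2. Proof. by rewrite tpermD // ?n12 // eq_sym n23. Qed.

Ltac fin := rewrite ?tpermL ?tpermR ?s12_0 ?s12_3 ?s13_0 ?s13_2 ?perm1 ?jjM G2g;
  rewrite -?scaleNr -!mul_mpolyC; ring.

Lemma c_d x y d : (2 : C) *: Gg x y 0 0 0 d = d *: Q (Mf mI mI mI mI) 1 x y.
Proof. rewrite /Q !fac_II ?Mf_0 ?Mf_1 ?Mf_2 ?Mf_3 //. fin. Qed.
Lemma c_a x y a : (2 : C) *: Gg x y a 0 0 0 = (- a) *: Q (Mf mJ mI mJ mI) 1 x y.
Proof. rewrite /Q !fac_JI ?Mf_0 ?Mf_1 ?Mf_2 ?Mf_3 //. fin. Qed.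
Lemma c_b x y b : (2 : C) *: Gg x y 0 b 0 0 = b *: Q (Mf mI mW mI mW) 1 x y.
Proof. rewrite /Q !fac_IW ?Mf_0 ?Mf_1 ?Mf_2 ?Mf_3 //. fin. Qed.
Lemma c_c x y c : (2 : C) *: Gg x y 0 0 c 0 = (- c) *: Q (Mf mJ mW mJ mW) 1 x y.
Proof. rewrite /Q !fac_JW ?Mf_0 ?Mf_1 ?Mf_2 ?Mf_3 //. fin. Qed.
Lemma c5 x y a : (2 : C) *: Gg x y a a a a = (- (a + a)) *: Q (Mf mJ mI mJ mI) (tperm i1 i2) x y.
Proof. rewrite /Q !fac_JI ?Mf_0 ?Mf_1 ?Mf_2 ?Mf_3 //. fin. Qed.
Lemma c6 x y a : (2 : C) *: Gg x y a (- a) (- a) a = (a + a) *: Q (Mf mI mI mI mI) (tperm i1 i2) x y.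
Proof. rewrite /Q !fac_II ?Mf_0 ?Mf_1 ?Mf_2 ?Mf_3 //. fin. Qed.
Lemma c7 x y a : (2 : C) *: Gg x y a a (- a) (- a) = (a + a) *: Q (Mf mI mW mI mW) (tperm i1 i2) x y.
Proof. rewrite /Q !fac_IW ?Mf_0 ?Mf_1 ?Mf_2 ?Mf_3 //. fin. Qed.
Lemma c8 x y a : (2 : C) *: Gg x y a (- a) a (- a) = (- (a + a)) *: Q (Mf mJ mW mJ mW) (tperm i1 i2) x y.
Proof. rewrite /Q !fac_JW ?Mf_0 ?Mf_1 ?Mf_2 ?Mf_3 //. fin. Qed.
Lemma c9 x y a : (2 : C) *: Gg x y a a (- a) a = (- (a + a)) *: Q (Mf mJ mI mJ mI) (tperm i1 i3) x y.
Proof. rewrite /Q !fac_JI ?Mf_0 ?Mf_1 ?Mf_2 ?Mf_3 //. fin. Qed.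
Lemma c10 x y a : (2 : C) *: Gg x y a (- a) a a = (a + a) *: Q (Mf mI mI mI mI) (tperm i1 i3) x y.
Proof. rewrite /Q !fac_II ?Mf_0 ?Mf_1 ?Mf_2 ?Mf_3 //. fin. Qed.
Lemma c11 x y a : (2 : C) *: Gg x y a a a (- a) = (a + a) *: Q (Mf mI mW mI mW) (tperm i1 i3) x y.
Proof. rewrite /Q !fac_IW ?Mf_0 ?Mf_1 ?Mf_2 ?Mf_3 //. fin. Qed.
Lemma c12 x y a : (2 : C) *: Gg x y a (- a) (- a) (- a) = (a + a) *: Q (Mf mJ mW mJ mW) (tperm i1 i3) x y.
Proof. rewrite /Q !fac_JW ?Mf_0 ?Mf_1 ?Mf_2 ?Mf_3 //. fin. Qed.

Lemma sq_cases {x y : C} : x ^+ 2 = y ^+ 2 -> y = x \/ y = - x.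
Proof.
move=> e; have : (y - x) * (y + x) = 0 by rewrite (_ : (y - x) * (y + x) = y ^+ 2 - x ^+ 2); [rewrite e subrr | ring].
move/eqP; rewrite mulf_eq0 => /orP[/eqP h|/eqP h]; [left|right].
  by apply/eqP; rewrite -subr_eq0 h.
by apply/eqP; rewrite -subr_eq0 opprK h.
Qed.

Lemma aa0 (a : C) : a != 0 -> a + a != 0.
Proof.
move=> a0; rewrite (_ : a + a = a * 2); last by ring.
by rewrite mulf_neq0 // pnatr_eq0.
Qed.

Ltac detone := lazymatch goal with
  | |- \det mI = 1 => exact: det_mI
  | |- \det mJ = 1 => exact: det_mJ
  | |- \det mW = 1 => exact: det_mW end.

Ltac use cl M s lam :=
  apply: (@orbit_of _ _ _ _ M s lam);
  [ apply: det_Mf; detone | rewrite ?oppr_eq0 ?aa0 // | exact: (cl X Y _) ].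

Lemma H2 a b c d : ~ (a = 0 /\ b = 0 /\ c = 0 /\ d = 0) -> cond2 a b c d ->
  in_proj_orbit (G a b c d) q0.
Proof.
move=> nz [[e1 [e2 e3]] | [[ha hb hc]|[ha hb hd]|[ha hc hd]|[hb hc hd]]].
- have a0 : a != 0.
    apply/eqP => a0; apply: nz; subst a.
    have b0 : b = 0 by case: (sq_cases e1) => ->; rewrite ?oppr0.
    subst b; have c0 : c = 0 by case: (sq_cases e2) => ->; rewrite ?oppr0.
    subst c; have d0 : d = 0 by case: (sq_cases e3) => ->; rewrite ?oppr0.
    by subst d.
  have ec := etrans e1 e2; have ed := etrans ec e3.
  case: (sq_cases e1) => ->; case: (sq_cases ec) => ->; case: (sq_cases ed) => ->.
  + use c5 (Mf mJ mI mJ mI) (tperm i1 i2) (- (a + a)).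
  + use c11 (Mf mI mW mI mW) (tperm i1 i3) (a + a).
  + use c9 (Mf mJ mI mJ mI) (tperm i1 i3) (- (a + a)).
  + use c7 (Mf mI mW mI mW) (tperm i1 i2) (a + a).
  + use c10 (Mf mI mI mI mI) (tperm i1 i3) (a + a).
  + use c8 (Mf mJ mW mJ mW) (tperm i1 i2) (- (a + a)).
  + use c6 (Mf mI mI mI mI) (tperm i1 i2) (a + a).
  + use c12 (Mf mJ mW mJ mW) (tperm i1 i3) (a + a).
- subst; have d0 : d != 0 by apply/eqP => d0; apply: nz; subst.
  use c_d (Mf mI mI mI mI) (1%g : {perm 'I_4}) d.
- subst; have c0 : c != 0 by apply/eqP => c0; apply: nz; subst.
  use c_c (Mf mJ mW mJ mW) (1%g : {perm 'I_4}) (- c).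
- subst; have b0 : b != 0 by apply/eqP => b0; apply: nz; subst.
  use c_b (Mf mI mW mI mW) (1%g : {perm 'I_4}) b.
- subst; have a0 : a != 0 by apply/eqP => a0; apply: nz; subst.
  use c_a (Mf mJ mI mJ mI) (1%g : {perm 'I_4}) (- a).
Qed.

Lemma G_neq0 a b c d : ~ (a = 0 /\ b = 0 /\ c = 0 /\ d = 0) -> G a b c d != 0.
Proof.
move=> nz; apply/eqP => G0; apply: nz.
have e1 := cGE a b c d true true true true.
have e2 := cGE a b c d true true false false.
have e3 := cGE a b c d true false true false.
have e4 := cGE a b c d true false false true.
move: e1 e2 e3 e4; rewrite G0 !mcoeff0 /coefG /= => e1 e2 e3 e4.
by apply: algS'; rewrite -?e1 -?e2 -?e3 -?e4 mul0r.
Qed.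

Theorem mainTheorem8 (a b c d : C) :
  ~ (a = 0 /\ b = 0 /\ c = 0 /\ d = 0) ->
  (reducible (G a b c d) <->
     ((a ^+ 2 = b ^+ 2 /\ b ^+ 2 = c ^+ 2 /\ c ^+ 2 = d ^+ 2) \/
      [\/ [/\ a = 0, b = 0 & c = 0], [/\ a = 0, b = 0 & d = 0],
          [/\ a = 0, c = 0 & d = 0] | [/\ b = 0, c = 0 & d = 0]]))
  /\
  (((a ^+ 2 = b ^+ 2 /\ b ^+ 2 = c ^+ 2 /\ c ^+ 2 = d ^+ 2) \/
      [\/ [/\ a = 0, b = 0 & c = 0], [/\ a = 0, b = 0 & d = 0],
          [/\ a = 0, c = 0 & d = 0] | [/\ b = 0, c = 0 & d = 0]])
   <-> in_proj_orbit (G a b c d) q0).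
Proof.
move=> nz; have G0 := @G_neq0 a b c d nz.
split; split.
- exact: (@H1 a b c d nz).
- by move=> h; apply: (@H3 a b c d G0); apply: (@H2 a b c d nz).
- exact: (@H2 a b c d nz).
- by move=> o; apply: (@H1 a b c d nz); apply: (@H3 a b c d G0).
Qed.
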